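(* Let $K$ be a field of characteristic zero, let $L$ be a $K$-linear functional on $K[u]$ with moments $\mu_s=L(u^s)$, and let $(p_n(x))_{n\ge0}$ be monic polynomials over $K$ with $\deg p_n=n$ and $L(p_m p_n)=\omega_n\delta_{m,n}$, $\omega_n\neq0$ for all $n$. Write $\int f(u)\,d\mu(u)$ for $L(f)$, and put $q_n(y)=\int \frac{p_n(u)}{y-u}\,d\mu(u)$. Let $k,n$ be non-negative integers and $y_1,\dots,y_k$ variables. If $n\ge k$, then $$ \frac{\det\limits_{0\le i,j\le n-1}\left(\int \frac{u^{i+j}\,d\mu(u)}{\prod_{\ell=1}^k(u-y_\ell)}\right)}{\det\limits_{0\le i,j\le n-k-1}(\mu_{i+j})} =(-1)^{nk}\frac{\det\limits_{1\le i,j\le k}\big(q_{n-k+j-1}(y_i)\big)}{\prod_{1\le i<j\le k}(y_i-y_j)}. $$ If $n<k$, then $$ \det\limits_{0\le i,j\le n-1}\left(\int \frac{u^{i+j}\,d\mu(u)}{\prod_{\ell=1}^k(u-y_\ell)}\right) =(-1)^{nk}\frac{\det N}{\prod_{1\le i<j\le k}(y_i-y_j)}, $$ where $N$ is the $k\times k$ matrix whose $i$-th row is $\big(y_i^{k-n-1},\dots,y_i^2,y_i,1,q_0(y_i),q_1(y_i),\dots,q_{n-1}(y_i)\big)$. Determinants of empty matrices and empty products equal $1$.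
   Context: The notation $\int f(u)\,d\mu(u)$ means $L(f)$; it may be read analytically (if $L$ is given by a measure) or formally: $\frac{1}{u-y}$ for a variable $y$ is expanded as $-\sum_{i\ge0}u^iy^{-i-1}$, a formal power series in $1/y$, and $L$ is applied coefficientwise. In particular $q_n(y)=\sum_{i\ge0}L(u^ip_n(u))\,y^{-i-1}$. *)

(* Defs.v *)
From HB Require Import structures.
From mathcomp Require Import all_boot all_order all_algebra.
From mathcomp Require Import boolp zify.
Set Implicit Arguments. Unset Strict Implicit. Unset Printing Implicit Defensive.
Import Order.TTheory GRing.Theory.
Local Open Scope ring_scope.

Record fps (R : Type) := FPS { fcoef : nat -> R }.

HB.instance Definition _ (R : Type) := gen_eqMixin (fps R).
HB.instance Definition _ (R : Type) := gen_choiceMixin (fps R).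

Lemma fps_ext (R : Type) (f g : fps R) : (forall n, fcoef f n = fcoef g n) -> f = g.
Proof. by case: f; case: g => a b H; congr FPS; apply: funext => n; exact: H. Qed.

Section FpsRing.
Variable R : comNzRingType.
Implicit Types f g h : fps R.

Definition fps0 : fps R := FPS (fun _ => 0).
Definition fpsD f g := FPS (fun n => fcoef f n + fcoef g n).
Definition fpsN f := FPS (fun n => - fcoef f n).
Lemma fpsDA : associative fpsD.
Proof. by move=> f g h; apply: fps_ext => n /=; rewrite addrA. Qed.
Lemma fpsDC : commutative fpsD.
Proof. by move=> f g; apply: fps_ext => n /=; rewrite addrC. Qed.
Lemma fps0D : left_id fps0 fpsD.
Proof. by move=> f; apply: fps_ext => n /=; rewrite add0r. Qed.
Lemma fpsND : left_inverse fps0 fpsN fpsD.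
Proof. by move=> f; apply: fps_ext => n /=; rewrite addNr. Qed.
HB.instance Definition _ := GRing.isZmodule.Build (fps R) fpsDA fpsDC fps0D fpsND.

Definition fps1 : fps R := FPS (fun n => (n == 0)%:R).
Definition fpsM f g :=
  FPS (fun n => \sum_(j < n.+1) fcoef f j * fcoef g (n - j)).

Lemma fpsM_rev f g n :
  fcoef (fpsM f g) n = \sum_(j < n.+1) fcoef f (n - j) * fcoef g j.
Proof.
rewrite /= (reindex_inj rev_ord_inj) /=.
by apply: eq_bigr => j _; rewrite (sub_ordK j).
Qed.

Lemma fpsM_def f g n :
  fcoef (fpsM f g) n = \sum_(j < n.+1) fcoef f j * fcoef g (n - j).
Proof. by []. Qed.

Lemma fpsMA : associative fpsM.
Proof.
move=> p q r; apply: fps_ext=> i; rewrite [RHS]fpsM_rev fpsM_def.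
pose coef3 j k := fcoef p j * (fcoef q (i - j - k) * fcoef r k).
transitivity (\sum_(j < i.+1) \sum_(k < i.+1 | (k <= i - j)%N) coef3 j k).
  apply: eq_bigr => j _; rewrite fpsM_rev big_distrr /=.
  by rewrite (big_ord_narrow_leq (leq_subr _ _)).
rewrite (exchange_big_dep predT) //; apply: eq_bigr => k _.
transitivity (\sum_(j < i.+1 | (j <= i - k)%N) coef3 j k).
  apply: eq_bigl => j; rewrite -ltnS -(ltnS j) -!subSn ?leq_ord //.
  by rewrite -subn_gt0 -(subn_gt0 j) -!subnDA addnC.
rewrite (big_ord_narrow_leq (leq_subr _ _)) fpsM_def big_distrl /=.
by apply: eq_bigr => j _; rewrite /coef3 -!subnDA addnC mulrA.
Qed.

Lemma fpsMC : commutative fpsM.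
Proof.
by move=> f g; apply: fps_ext => n; rewrite fpsM_rev /=; apply: eq_bigr => j _; rewrite mulrC.
Qed.

Lemma fps1M : left_id fps1 fpsM.
Proof.
move=> f; apply: fps_ext => n; rewrite /= big_ord_recl subn0 /= mul1r.
by rewrite big1 ?addr0 // => j _; rewrite mul0r.
Qed.

Lemma fpsMDl : left_distributive fpsM fpsD.
Proof.
move=> f g h; apply: fps_ext => n /=; rewrite -big_split /=.
by apply: eq_bigr => j _; rewrite mulrDl.
Qed.

Lemma fps1_neq0 : fps1 != fps0.
Proof.
apply/eqP => /(congr1 (fun f => fcoef f 0)) /= /eqP; by rewrite oner_eq0.
Qed.

HB.instance Definition _ := GRing.Zmodule_isComNzRing.Build (fps R)
  fpsMA fpsMC fps1M fpsMDl fps1_neq0.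

Definition fps_unit : {pred fps R} := fun x => `[< exists y, y * x = 1 >].
Definition fps_inv (x : fps R) : fps R :=
  match pselect (exists y, y * x = 1) with
  | left h => projT1 (cid h)
  | right _ => x
  end.
Lemma fps_mulVx : {in fps_unit, left_inverse 1 fps_inv *%R}.
Proof.
move=> x /asboolP ux; rewrite /fps_inv; case: pselect => // h.
exact: (projT2 (cid h)).
Qed.
Lemma fps_unitPl x y : y * x = 1 -> fps_unit x.
Proof. by move=> h; apply/asboolP; exists y. Qed.
Lemma fps_invr_out : {in [predC fps_unit], fps_inv =1 id}.
Proof.
move=> x; rewrite inE => /asboolPn ux; rewrite /fps_inv; case: pselect => //.
Qed.
HB.instance Definition _ := GRing.ComNzRing_hasMulInverse.Build (fps R)
  fps_mulVx fps_unitPl fps_invr_out.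

Lemma fcoefM f g n : fcoef (f * g) n = \sum_(j < n.+1) fcoef f j * fcoef g (n - j).
Proof. by []. Qed.
Lemma fcoef0 n : fcoef (0 : fps R) n = 0. Proof. by []. Qed.
End FpsRing.

Section FpsIdomain.
Variable R : idomainType.
Lemma fps_integral : GRing.integral_domain_axiom (fps R).
Proof.
move=> f g fg0; apply/negPn/negP; rewrite negb_or => /andP[nf ng].
have exf : exists i, fcoef f i != 0.
  apply/not_existsP => H; apply/negP: nf; rewrite negbK; apply/eqP/fps_ext => n.
  by have /negP := H n; rewrite negbK => /eqP ->.
have exg : exists i, fcoef g i != 0.
  apply/not_existsP => H; apply/negP: ng; rewrite negbK; apply/eqP/fps_ext => n.
  by have /negP := H n; rewrite negbK => /eqP ->.
case: (ex_minnP exf) => i fi mi; case: (ex_minnP exg) => j gj mj.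
have : fcoef (f * g) (i + j) = fcoef f i * fcoef g j.
  rewrite fcoefM (bigD1 (Ordinal (leq_addr j i : i < (i + j).+1)%N)) //= addKn.
  rewrite big1 ?addr0 // => l nl.
  have nli : (l : nat) != i by move: nl; apply: contra => /eqP e; apply/eqP/val_inj.
  have [lti|] := ltnP l i.
    have : fcoef f l == 0 by apply/negPn/negP => /mi; rewrite leqNgt lti.
    by move/eqP ->; rewrite mul0r.
  rewrite leq_eqVlt eq_sym (negbTE nli) /= => ilt.
  have : fcoef g (i + j - l) == 0.
    apply/negPn/negP => /mj; rewrite leqNgt; apply/negP/negPn.
    by have := ltn_ord l; lia.
  by move/eqP ->; rewrite mulr0.
by rewrite fg0 fcoef0 => /esym/eqP; rewrite mulf_eq0 (negbTE fi) (negbTE gj).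
Qed.
HB.instance Definition _ := GRing.ComUnitRing_isIntegral.Build (fps R) fps_integral.
End FpsIdomain.

Fixpoint mfps (R : idomainType) (k : nat) : idomainType :=
  match k with 0 => R | k'.+1 => (fps (mfps R k') : idomainType) end.

(* Multivariate formal power series  R[[x_0, ..., x_{k-1}]]  as iterated     *)
(* univariate ones: mfps R k.+1 = (mfps R k)[[x_k]].  A coefficient function *)
(* c : seq nat -> R is read on exponent lists a of length k, a`_l being the  *)
(* exponent of x_l.                                                          *)

Notation "x %:F" := (@FracField.tofrac _ x) : ring_scope.

Fixpoint mfps_of (R : idomainType) (k : nat) : (seq nat -> R) -> mfps R k :=
  match k with
  | 0 => fun c => c [::]
  | k'.+1 => fun c => (FPS (fun n => mfps_of k' (fun s => c (rcons s n)))
                       : fps (mfps R k'))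
  end.

Fixpoint mmap (R S : idomainType) (f : R -> S) (k : nat) : mfps R k -> mfps S k :=
  match k with
  | 0 => fun x => f x
  | k'.+1 => fun x => (FPS (fun n => mmap f (fcoef x n)) : fps (mfps S k'))
  end.

Definition mconst (R : idomainType) (k : nat) (r : R) : mfps R k :=
  mfps_of k (fun a => if all (fun e => e == 0%N) a then r else 0).

(* univariate series  \sum_e c e * x_l^e  in the variable x_l *)
Definition mser (R : idomainType) (k l : nat) (c : nat -> R) : mfps R k :=
  mfps_of k (fun a =>
    if a == [seq (if j == l then nth 0%N a l else 0%N) | j <- iota 0 k]
    then c (nth 0%N a l) else 0).

Definition mvar (R : idomainType) (k l : nat) : mfps R k :=
  mser k l (fun e => (e == 1%N)%:R).

(* y_l := 1 / x_l, in the fraction field of R[[x_0..x_{k-1}]]; thus a       *)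
(* formal power series in 1/y_0, ..., 1/y_{k-1}.                             *)
Definition yvar (R : idomainType) (k l : nat) : {fraction mfps R k} :=
  ((mvar R k l)%:F)^-1.

(* The formal expansion of 1/(u - y_l) = - \sum_{i>=0} u^i y_l^{-i-1},       *)
(* a series in 1/y_l with coefficients in K[u].                              *)
Definition cauchy_kernel (K : fieldType) (k l : nat) : mfps {poly K} k :=
  mser k l (fun e => if e is i.+1 then - 'X^i else 0).

(* \int f(u) d\mu(u) for a formal series f with coefficients in K[u]:        *)
(* L applied coefficientwise.                                                 *)
Definition fint (K : fieldType) (L : {poly K} -> K) (k : nat)
  (f : mfps {poly K} k) : mfps K k := mmap L f.

(* \int u^m d\mu(u) / \prod_{l=1}^k (u - y_l) *)
Definition int_mono (K : fieldType) (L : {poly K} -> K) (k m : nat) : mfps K k :=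
  fint L (mconst k ('X^m) * \prod_(l < k) cauchy_kernel K k l).

(* q_n(y_l) = \int p_n(u) / (y_l - u) d\mu(u) *)
Definition qfun (K : fieldType) (L : {poly K} -> K) (p : nat -> {poly K})
  (k n l : nat) : mfps K k :=
  fint L (mconst k (p n) * - cauchy_kernel K k l).

Definition hankel (K : fieldType) (L : {poly K} -> K) (m : nat) : K :=
  \det (\matrix_(i < m, j < m) L 'X^(i + j)).

Definition vandermonde_y (K : fieldType) (k : nat) : {fraction mfps K k} :=
  \prod_(i < k) \prod_(j < k | (i < j)%N) (yvar K k i - yvar K k j).

(* Main.v *)
Require Import Defs.
From HB Require Import structures.
From mathcomp Require Import all_boot all_order all_algebra.
From mathcomp Require Import boolp zify ring fingroup perm.
Set Implicit Arguments. Unset Strict Implicit. Unset Printing Implicit Defensive.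
Import Order.TTheory GRing.Theory.
Local Open Scope ring_scope.

Section FpsGen.
Variable R : comNzRingType.

Definition fC (c : R) : fps R := FPS (fun n => if n == 0%N then c else 0).

Lemma fC_add a b : fC (a + b) = fC a + fC b.
Proof. by apply: fps_ext => -[|n] /=; rewrite ?addr0. Qed.
Lemma fC0 : fC 0 = 0.
Proof. by apply: fps_ext => -[|n]. Qed.
Lemma fC_opp a : fC (- a) = - fC a.
Proof. by apply: fps_ext => -[|n] /=; rewrite ?oppr0. Qed.
Lemma fC1 : fC 1 = 1.
Proof. by apply: fps_ext => -[|n]. Qed.
Lemma fCM_l c f : fC c * f = FPS (fun n => c * fcoef f n).
Proof.
apply: fps_ext => n; rewrite fcoefM big_ord_recl /= subn0.
by rewrite big1 ?addr0 // => j _; rewrite mul0r.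
Qed.
Lemma fC_mul a b : fC (a * b) = fC a * fC b.
Proof. by rewrite fCM_l; apply: fps_ext => -[|n] /=; rewrite ?mulr0. Qed.

Definition fpsmap (S : comNzRingType) (f : R -> S) (F : fps R) : fps S :=
  FPS (fun n => f (fcoef F n)).

End FpsGen.

Section FpsMap.
Variables R S : comNzRingType.
Variable f : R -> S.

Lemma fpsmap_add (fD : forall a b, f (a + b) = f a + f b) F G :
  fpsmap f (F + G) = fpsmap f F + fpsmap f G.
Proof. by apply: fps_ext => n /=; rewrite fD. Qed.

Lemma fpsmap_sum (f0 : f 0 = 0) (fD : forall a b, f (a + b) = f a + f b)
  (I : Type) (r : seq I) (P : pred I) (F : I -> R) :
  f (\sum_(i <- r | P i) F i) = \sum_(i <- r | P i) f (F i).
Proof. exact: (big_morph f fD f0). Qed.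

Lemma fpsmap_mul (f0 : f 0 = 0) (fD : forall a b, f (a + b) = f a + f b)
  (fM : forall a b, f (a * b) = f a * f b) F G :
  fpsmap f (F * G) = fpsmap f F * fpsmap f G.
Proof.
apply: fps_ext => n; rewrite fcoefM.
transitivity (f (fcoef (F * G) n)); first by [].
rewrite fcoefM (fpsmap_sum f0 fD).
by apply: eq_bigr => j _; rewrite fM.
Qed.

Lemma fpsmap_fC (c : R) (f0 : f 0 = 0) : fpsmap f (fC c) = fC (f c).
Proof. by apply: fps_ext => -[|n] /=. Qed.
End FpsMap.

Section Mfps.
Variable R : idomainType.

Lemma mfps_ofS k (c : seq nat -> R) :
  mfps_of k.+1 c = (FPS (fun n => mfps_of k (fun s => c (rcons s n))) : fps (mfps R k)).
Proof. by []. Qed.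

Lemma mfps_of_ext k (c c' : seq nat -> R) :
  (forall s, size s = k -> c s = c' s) -> mfps_of k c = mfps_of k c'.
Proof.
elim: k c c' => [|k IH] c c' H; first by apply: H.
apply: fps_ext => n /=; apply: IH => s Hs; apply: H; by rewrite size_rcons Hs.
Qed.

Lemma mfps_of0 k : mfps_of k (fun _ => (0 : R)) = 0.
Proof.
elim: k => [|k IH] //; apply: fps_ext => n /=; exact: IH.
Qed.

Lemma mconstS k (r : R) : mconst k.+1 r = fC (mconst k r).
Proof.
apply: fps_ext => n /=; rewrite /mconst /=.
case: eqP => [->|/eqP nn].
  by apply: mfps_of_ext => s _; rewrite all_rcons /=.
rewrite -(mfps_of0 k); apply: mfps_of_ext => s _; rewrite all_rcons /=.
by rewrite (negbTE nn).
Qed.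

Lemma mconst0 k : mconst k (0 : R) = 0.
Proof. by elim: k => [|k IH] //; rewrite mconstS IH fC0. Qed.
Lemma mconst1 k : mconst k (1 : R) = 1.
Proof. by elim: k => [|k IH] //; rewrite mconstS IH fC1. Qed.
Lemma mconstD k (a b : R) : mconst k (a + b) = mconst k a + mconst k b.
Proof. by elim: k => [|k IH] //; rewrite !mconstS IH fC_add. Qed.
Lemma mconstN k (a : R) : mconst k (- a) = - mconst k a.
Proof. by elim: k => [|k IH] //; rewrite !mconstS IH fC_opp. Qed.
Lemma mconstM k (a b : R) : mconst k (a * b) = mconst k a * mconst k b.
Proof. by elim: k => [|k IH] //; rewrite !mconstS IH fC_mul. Qed.

End Mfps.

Section MmapLemmas.
Variables R S : idomainType.
Variable f : R -> S.
Hypothesis f0 : f 0 = 0.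
Hypothesis fD : forall a b, f (a + b) = f a + f b.

Lemma mmapS k (x : mfps R k.+1) : @mmap _ _ f k.+1 x = fpsmap (@mmap _ _ f k) x.
Proof. by []. Qed.

Lemma mmap0 k : @mmap _ _ f k 0 = 0.
Proof. by elim: k => [|k IH] //=; apply: fps_ext => n /=. Qed.

Lemma mmapD k (x y : mfps R k) : mmap f (x + y) = mmap f x + mmap f y.
Proof.
elim: k x y => [|k IH] x y //=; apply: fps_ext => n /=; exact: IH.
Qed.

Lemma mmap_sum k (I : Type) (r : seq I) (P : pred I) (F : I -> mfps R k) :
  mmap f (\sum_(i <- r | P i) F i) = \sum_(i <- r | P i) mmap f (F i).
Proof. exact: (big_morph _ (@mmapD k) (mmap0 k)). Qed.

Lemma mmap_const k (r : R) : mmap f (mconst k r) = mconst k (f r).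
Proof.
elim: k => [|k IH] //; rewrite !mconstS mmapS fpsmap_fC ?IH //; exact: mmap0.
Qed.

Hypothesis fM : forall a b, f (a * b) = f a * f b.
Hypothesis f1 : f 1 = 1.

Lemma mmapM k (x y : mfps R k) : mmap f (x * y) = mmap f x * mmap f y.
Proof.
elim: k x y => [|k IH] x y //=.
exact: (fpsmap_mul (@mmap0 k) (@mmapD k) IH).
Qed.

Lemma mmap1 k : @mmap _ _ f k 1 = 1.
Proof. by rewrite -(mconst1 _ k) mmap_const f1 mconst1. Qed.

Lemma mmap_prod k (I : Type) (r : seq I) (P : pred I) (F : I -> mfps R k) :
  mmap f (\prod_(i <- r | P i) F i) = \prod_(i <- r | P i) mmap f (F i).
Proof. exact: (big_morph _ (@mmapM k) (mmap1 k)). Qed.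

End MmapLemmas.

Lemma fcoefE (T : Type) (g : nat -> T) n : fcoef (FPS g) n = g n.
Proof. by []. Qed.

Lemma iota0S k : iota 0 k.+1 = rcons (iota 0 k) k.
Proof. by rewrite -addn1 iotaD add0n cats1. Qed.

Section Mser.
Variable R : idomainType.

Lemma mserS_lt k l (c : nat -> R) : (l < k)%N ->
  mser k.+1 l c = fC (mser k l c).
Proof.
move=> lk; apply: fps_ext => n; rewrite /mser mfps_ofS /fC !fcoefE.
have E : forall s, size s = k ->
  (rcons s n == [seq (if j == l then nth 0%N (rcons s n) l else 0%N) | j <- iota 0 k.+1])
  = (s == [seq (if j == l then nth 0%N s l else 0%N) | j <- iota 0 k]) && (n == 0%N).
  move=> s sk; rewrite iota0S map_rcons eqseq_rcons nth_rcons sk lk.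
  by rewrite (_ : (k == l) = false) //; apply/negbTE; rewrite neq_ltn lk orbT.
case: (boolP (n == 0%N)) => nn.
  apply: mfps_of_ext => s sk; rewrite E // nn andbT nth_rcons sk lk.
  by [].
rewrite -(mfps_of0 R k); apply: mfps_of_ext => s sk; rewrite E //.
by rewrite (negbTE nn) andbF.
Qed.

Lemma mserS_eq k (c : nat -> R) :
  mser k.+1 k c = (FPS (fun n => mconst k (c n)) : fps (mfps R k)).
Proof.
apply: fps_ext => n; rewrite /mser /mconst mfps_ofS !fcoefE.
apply: mfps_of_ext => s sk.
rewrite iota0S map_rcons eqseq_rcons nth_rcons sk ltnn eqxx eqxx andbT.
have -> : [seq (if j == k then n else 0%N) | j <- iota 0 k] = nseq k 0%N.
  apply: (@eq_from_nth _ 0%N); rewrite ?size_map ?size_iota ?size_nseq // => i ik.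
  rewrite (nth_map 0%N) ?size_iota // nth_iota // nth_nseq ik add0n.
  by rewrite (_ : (i == k) = false) //; apply/negbTE; rewrite neq_ltn ik.
have -> : all (fun e => e == 0%N) s = all (pred1 0%N) s by [].
case: (all_pred1P 0%N s) => [e|ne]; first by rewrite {1}e sk eqxx.
by rewrite (_ : (s == nseq k 0%N) = false) //; apply/negbTE/eqP => e; apply: ne; rewrite sk.
Qed.

Lemma mser_fC k l (r : R) : (l < k)%N -> mser k l (fcoef (fC r)) = mconst k r.
Proof.
elim: k => [//|k IH] lk; rewrite mconstS.
case: (ltngtP l k) => [lk'| |->]; first by rewrite mserS_lt // IH.
  by move=> h; move: lk; rewrite ltnS leqNgt h.
rewrite mserS_eq; apply: fps_ext => -[|n] /=; first by [].
by rewrite mconst0.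
Qed.

Lemma mser_add k l (F G : fps R) : (l < k)%N ->
  mser k l (fcoef (F + G)) = mser k l (fcoef F) + mser k l (fcoef G).
Proof.
elim: k => [//|k IH] lk.
case: (ltngtP l k) => [lk'| |->]; first by rewrite !mserS_lt // IH // fC_add.
  by move=> h; move: lk; rewrite ltnS leqNgt h.
rewrite !mserS_eq; apply: fps_ext => n /=; exact: mconstD.
Qed.

Lemma mser_opp k l (F : fps R) : (l < k)%N ->
  mser k l (fcoef (- F)) = - mser k l (fcoef F).
Proof.
elim: k => [//|k IH] lk.
case: (ltngtP l k) => [lk'| |->]; first by rewrite !mserS_lt // IH // fC_opp.
  by move=> h; move: lk; rewrite ltnS leqNgt h.
rewrite !mserS_eq; apply: fps_ext => n /=; exact: mconstN.
Qed.

Lemma mser_mul k l (F G : fps R) : (l < k)%N ->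
  mser k l (fcoef (F * G)) = mser k l (fcoef F) * mser k l (fcoef G).
Proof.
elim: k => [//|k IH] lk.
case: (ltngtP l k) => [lk'| |->]; first by rewrite !mserS_lt // IH // fC_mul.
  by move=> h; move: lk; rewrite ltnS leqNgt h.
rewrite !mserS_eq.
have H := @fpsmap_mul R (mfps R k) (mconst k) (mconst0 R k) (@mconstD R k) (@mconstM R k) F G.
exact: H.
Qed.

Lemma mser_ext k l (c c' : nat -> R) : c =1 c' -> mser k l c = mser k l c'.
Proof. by move=> e; rewrite /mser; apply: mfps_of_ext => s _; rewrite e. Qed.

End Mser.

Lemma mmap_mser (R S : idomainType) (f : R -> S) (f0 : f 0 = 0)
  (fD : forall a b, f (a + b) = f a + f b) k l (c : nat -> R) : (l < k)%N ->
  mmap f (mser k l c) = mser k l (fun n => f (c n)).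
Proof.
elim: k => [//|k IH] lk.
case: (ltngtP l k) => [lk'| |->].
- rewrite !mserS_lt // mmapS fpsmap_fC ?IH //; exact: mmap0.
- by move=> h; move: lk; rewrite ltnS leqNgt h.
rewrite !mserS_eq; apply: fps_ext => n /=; exact: mmap_const.
Qed.

Lemma fC_inj (R : comNzRingType) (a b : R) : fC a = fC b -> a = b.
Proof. by move/(congr1 (fun F => fcoef F 0)). Qed.

Section Mvar.
Variable R : idomainType.


Lemma mvarS_lt k l : (l < k)%N -> mvar R k.+1 l = fC (mvar R k l).
Proof. exact: mserS_lt. Qed.
Lemma mvarS_eq k : fcoef (mvar R k.+1 k) 1 = 1.
Proof. by rewrite /mvar mserS_eq /= mconst1. Qed.

Lemma mvar_neq0 k l : (l < k)%N -> mvar R k l != 0.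
Proof.
elim: k => [//|k IH] lk.
case: (ltngtP l k) => [lk'| |->].
- rewrite mvarS_lt //; apply: contra (IH lk') => /eqP e.
  by apply/eqP; apply: fC_inj; rewrite e fC0.
- by move=> h; move: lk; rewrite ltnS leqNgt h.
apply/eqP => /(congr1 (fun F => fcoef F 1)); rewrite mvarS_eq /= => /eqP.
by rewrite oner_eq0.
Qed.

Lemma mvar_inj k l m : (l < k)%N -> (m < k)%N -> mvar R k l = mvar R k m -> l = m.
Proof.
elim: k l m => [//|k IH] l m lk mk.
have dif : forall a, (a < k)%N -> mvar R k.+1 a <> mvar R k.+1 k.
  move=> a ak; rewrite mvarS_lt // => /(congr1 (fun F => fcoef F 1)).
  rewrite mvarS_eq /= => /eqP; by rewrite eq_sym oner_eq0.
case: (ltngtP l k) => [lk'| h |->].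
- case: (ltngtP m k) => [mk'| h |->].
  + by rewrite !mvarS_lt // => /fC_inj; apply: IH.
  + by move: mk; rewrite ltnS leqNgt h.
  + by move/(dif _ lk').
- by move: lk; rewrite ltnS leqNgt h.
case: (ltngtP m k) => [mk'| h |->] //.
- by move/esym/(dif _ mk').
- by move: mk; rewrite ltnS leqNgt h.
Qed.

End Mvar.

Section FX.
Variable R : comNzRingType.
Definition fX : fps R := FPS (fun e => (e == 1%N)%:R).
Lemma fXM (G : fps R) : fX * G = FPS (fun n => if n is n'.+1 then fcoef G n' else 0).
Proof.
apply: fps_ext => -[|n]; rewrite fcoefM.
  by rewrite big_ord_recl big_ord0 /= mul0r addr0.
rewrite big_ord_recl /= mul0r add0r big_ord_recl /= mul1r subSS subn0.
by rewrite big1 ?addr0 // => j _; rewrite mul0r.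
Qed.
End FX.

Section KLemmas.
Variable K : fieldType.

Definition CK : fps {poly K} := FPS (fun e => if e is i.+1 then - 'X^i else 0).

Lemma CK_id : CK * (fC 'X * fX _ - fC 1) = fX _.
Proof.
have -> : CK * (fC 'X * fX _ - fC 1) = fC 'X * (fX _ * CK) - fC 1 * CK.
  by rewrite mulrBr mulrA [CK * _]mulrC -mulrA [CK * fC 1]mulrC.
rewrite !fCM_l fXM; apply: fps_ext => -[|[|m]] /=.
- by rewrite !mulr0 subr0.
- by rewrite mulr0 mul1r opprK add0r expr0.
- by rewrite mul1r opprK mulrN exprS addNr.
Qed.

Lemma cauchy_id k l : (l < k)%N ->
  cauchy_kernel K k l * (mconst k 'X * mvar {poly K} k l - 1) = mvar {poly K} k l.
Proof.
move=> lk.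
have H : mser k l (fcoef (CK * (fC 'X * fX _ - fC 1))) = mser k l (fcoef (fX {poly K})).
  by rewrite CK_id.
rewrite mser_mul // mser_add // mser_opp // mser_mul // !mser_fC // mconst1 in H.
exact: H.
Qed.

Lemma mmap_polyC_mvar k l : (l < k)%N ->
  mmap (@polyC K) (mvar K k l) = mvar {poly K} k l.
Proof.
move=> lk; rewrite /mvar mmap_mser //; last by move=> a b; rewrite polyCD.
by apply: mser_ext => n; rewrite polyC_natr.
Qed.

Lemma mmap_polyC_const k (a : K) : mmap (@polyC K) (mconst k a) = mconst k a%:P.
Proof. exact: mmap_const. Qed.

Variable L : {poly K} -> K.
Hypothesis L_linear : forall (a : K) (f g : {poly K}), L (a *: f + g) = a * L f + L g.

Lemma L0 : L 0 = 0.
Proof.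
have := L_linear 1 0 0; rewrite scale1r addr0 mul1r => h.
by apply: (addrI (L 0)); rewrite addr0 -h.
Qed.
Lemma LD f g : L (f + g) = L f + L g.
Proof. by rewrite -[f]scale1r L_linear mul1r scale1r. Qed.
Lemma LZ a f : L (a *: f) = a * L f.
Proof. by rewrite -[a *: f]addr0 L_linear L0 addr0. Qed.

Lemma fint_add k (x y : mfps {poly K} k) : fint L (x + y) = fint L x + fint L y.
Proof. rewrite /fint; exact: (@mmapD {poly K} K L LD k x y). Qed.
Lemma fint0 k : fint L (0 : mfps {poly K} k) = 0.
Proof. rewrite /fint; exact: (@mmap0 {poly K} K L L0 k). Qed.
Lemma fint_sum k (I : Type) (r : seq I) (P : pred I) (F : I -> mfps {poly K} k) :
  fint L (\sum_(i <- r | P i) F i) = \sum_(i <- r | P i) fint L (F i).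
Proof. rewrite /fint; exact: (@mmap_sum {poly K} K L L0 LD k I r P F). Qed.
Lemma fint_const k f : fint L (mconst k f) = mconst k (L f).
Proof. rewrite /fint; exact: (@mmap_const {poly K} K L L0 k f). Qed.

Lemma fint_scal k (c : mfps K k) (g : mfps {poly K} k) :
  fint L (mmap (@polyC K) c * g) = c * fint L g.
Proof.
rewrite /fint; elim: k c g => [|k IH] c g /=.
  by rewrite mul_polyC LZ.
apply: fps_ext => n; rewrite fcoefM.
transitivity (mmap L (fcoef (fpsmap (@mmap K {poly K} (@polyC K) k) c * g) n)); first by [].
rewrite fcoefM (@mmap_sum {poly K} K L L0 LD k); apply: eq_bigr => j _; exact: IH.
Qed.

Lemma fint_opp k (x : mfps {poly K} k) : fint L (- x) = - fint L x.
Proof.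
apply/eqP; rewrite -subr_eq0 opprK -fint_add addNr; apply/eqP; exact: fint0.
Qed.

End KLemmas.

Definition dnat (R : comNzRingType) N (f : nat -> nat -> R) : R :=
  \det (\matrix_(i < N, j < N) f (i : nat) (j : nat)).

Section Dnat.
Variable R : comNzRingType.
Implicit Types f g : nat -> nat -> R.

Lemma dnat_ext N f g : (forall i j, (i < N)%N -> (j < N)%N -> f i j = g i j) ->
  dnat N f = dnat N g.
Proof.
move=> H; rewrite /dnat; congr (\det _); apply/matrixP => i j; rewrite !mxE.
exact: H.
Qed.

Lemma dnat0 f : dnat 0 f = 1.
Proof. exact: det_mx00. Qed.

Lemma dnat_expand N f : dnat N.+1 f =
  \sum_(i < N.+1) f i 0%N * ((-1) ^+ i * dnat N (fun a b => f (bump i a) b.+1)).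
Proof.
rewrite /dnat (expand_det_col _ ord0); apply: eq_bigr => i _.
rewrite mxE /cofactor addn0; congr (_ * (_ * _)).
by congr (\det _); apply/matrixP => a b; rewrite !mxE.
Qed.

Lemma det_anti_TL m p f :
  (forall i j, (i < m)%N -> (j < p)%N -> f i j = 0) ->
  dnat (m + p) f = (-1) ^+ (m * p) * dnat m (fun i j => f i (p + j)%N)
                   * dnat p (fun i j => f (m + i)%N j).
Proof.
elim: p f => [|p IH] f H.
  by rewrite addn0 muln0 expr0 mul1r dnat0 mulr1.
rewrite addnS dnat_expand (dnat_expand p).
rewrite -(big_mkord xpredT (fun i => f i 0%N * ((-1) ^+ i * dnat (m + p) (fun a b => f (bump i a) b.+1)))).
rewrite (big_cat_nat (leq0n m)) /=; last by lia.
rewrite big_nat_cond big1 ?add0r; last first.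
  by move=> i /andP[/andP[_ im] _]; rewrite H // mul0r.
rewrite -{1}[m]add0n big_addn.
rewrite (_ : (m + p).+1 - m = p.+1)%N; last by lia.
rewrite big_mkord mulr_sumr; apply: eq_bigr => i _.
rewrite (IH (fun a b => f (bump (i + m) a) b.+1)); last first.
  move=> a b am bp; rewrite /bump (_ : (i + m <= a)%N = false) ?add0n; last by lia.
  by rewrite H.
have -> : dnat m (fun a b => f (bump (i + m) a) (p + b).+1)
          = dnat m (fun i0 j => f i0 (p.+1 + j)%N).
  apply: dnat_ext => a b am _; rewrite /bump (_ : (i + m <= a)%N = false) ?add0n; last by lia.
  by rewrite addSn.
have -> : dnat p (fun a b => f (bump (i + m) (m + a)) b.+1)
          = dnat p (fun a b => f (m + bump i a)%N b.+1).
  by apply: dnat_ext => a b _ _; rewrite addnC bumpDl.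
rewrite addnC exprD mulnS exprD.
set T := dnat m _; set Z := dnat p _.
ring.
Qed.

Lemma dnat_rev N f : dnat N (fun i j => f (N.-1 - i)%N (N.-1 - j)%N) = dnat N f.
Proof.
pose r : {perm 'I_N} := perm (@rev_ord_inj N).
have E : \matrix_(i < N, j < N) f (N.-1 - i)%N (N.-1 - j)%N =
         row_perm r (col_perm r (\matrix_(i < N, j < N) f i j)).
  apply/matrixP => i j; rewrite !mxE !permE /=.
  by congr f => /=; lia.
rewrite /dnat E row_permE col_permE !det_mulmx !det_perm odd_permV.
by rewrite mulrCA -signr_addb addbb expr0 mulr1.
Qed.

Lemma det_anti_BR m p f :
  (forall i j, (m <= i < m + p)%N -> (p <= j < m + p)%N -> f i j = 0) ->
  dnat (m + p) f = (-1) ^+ (m * p) * dnat m (fun i j => f i (p + j)%N)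
                   * dnat p (fun i j => f (m + i)%N j).
Proof.
move=> H; rewrite -dnat_rev addnC det_anti_TL; last first.
  move=> i j ip jm; apply: H; apply/andP; split; lia.
rewrite mulnC -mulrA [in RHS]mulrAC -[in RHS]mulrA; congr (_ * _).
congr (_ * _).
- rewrite -[RHS]dnat_rev; apply: dnat_ext => i j ip jm; congr f; lia.
- rewrite -[RHS]dnat_rev; apply: dnat_ext => i j ip jm; congr f; lia.
Qed.

Lemma dnat_trig N f : (forall i j, (i < j < N)%N -> f i j = 0) ->
  dnat N f = \prod_(i < N) f i i.
Proof.
move=> H; rewrite /dnat det_trig; first by apply: eq_bigr => i _; rewrite mxE.
apply/is_trig_mxP => i j ij; rewrite mxE H //; by rewrite ij ltn_ord.
Qed.

Lemma dnat_tr N f : dnat N (fun i j => f j i) = dnat N f.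
Proof.
rewrite /dnat -det_tr; congr (\det _); apply/matrixP => i j; rewrite !mxE.
by [].
Qed.

Lemma dnat_diag N (d : nat -> R) :
  dnat N (fun i j => if i == j then d i else 0) = \prod_(i < N) d i.
Proof.
rewrite dnat_trig; first by apply: eq_bigr => i _; rewrite eqxx.
by move=> i j /andP[ij _]; rewrite ltn_eqF.
Qed.

Lemma dnat_mul N f g :
  dnat N f * dnat N g = dnat N (fun i j => \sum_(l < N) f i l * g l j).
Proof.
rewrite /dnat -det_mulmx; congr (\det _); apply/matrixP => i j; rewrite !mxE.
by apply: eq_bigr => l _; rewrite !mxE.
Qed.

Lemma dnat_opp N f : dnat N (fun i j => - f i j) = (-1) ^+ N * dnat N f.
Proof.
rewrite /dnat -detZ; congr (\det _); apply/matrixP => i j; rewrite !mxE.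
by rewrite mulN1r.
Qed.

End Dnat.

Lemma poly_wide (R : nzRingType) (q : {poly R}) N : (size q <= N)%N ->
  q = \sum_(i < N) q`_i *: 'X^i.
Proof.
move=> qN; rewrite -poly_def; apply/polyP => i; rewrite coef_poly.
by case: ltnP => // Ni; rewrite nth_default //; apply: leq_trans Ni.
Qed.

Section Bilin.
Variable R : fieldType.
Variable beta : {poly R} -> R.
Hypothesis beta_lin : forall (a : R) (f g : {poly R}), beta (a *: f + g) = a * beta f + beta g.

Lemma beta0 : beta 0 = 0.
Proof.
have := beta_lin 1 0 0; rewrite scale1r addr0 mul1r => h.
by apply: (addrI (beta 0)); rewrite addr0 -h.
Qed.
Lemma betaD f g : beta (f + g) = beta f + beta g.
Proof. by rewrite -[f]scale1r beta_lin mul1r scale1r. Qed.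
Lemma betaZ a f : beta (a *: f) = a * beta f.
Proof. by rewrite -[a *: f]addr0 beta_lin beta0 addr0. Qed.
Lemma beta_sum (I : Type) (r : seq I) (P : pred I) (F : I -> {poly R}) :
  beta (\sum_(i <- r | P i) F i) = \sum_(i <- r | P i) beta (F i).
Proof. exact: (big_morph beta betaD beta0). Qed.

Lemma beta_prod_expand N (P Q : {poly R}) : (size P <= N)%N -> (size Q <= N)%N ->
  beta (P * Q) = \sum_(b < N) (\sum_(a < N) P`_a * beta 'X^(a + b)) * Q`_b.
Proof.
move=> sP sQ.
transitivity (\sum_(a<N) \sum_(b<N) P`_a * beta 'X^(a+b) * Q`_b).
  rewrite {1}(poly_wide sP) {1}(poly_wide sQ) mulr_suml beta_sum; apply: eq_bigr => a _.
  rewrite mulr_sumr beta_sum; apply: eq_bigr => b _.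
  rewrite -scalerAl -scalerAr !betaZ -exprD; ring.
rewrite exchange_big /=; apply: eq_bigr => b _; by rewrite mulr_suml.
Qed.

Lemma dnat_bilin N (P Q : nat -> {poly R}) :
  (forall i, (i < N)%N -> (size (P i) <= N)%N) ->
  (forall j, (j < N)%N -> (size (Q j) <= N)%N) ->
  dnat N (fun i j => beta (P i * Q j)) =
  dnat N (fun i a => (P i)`_a) * dnat N (fun i j => beta 'X^(i + j))
  * dnat N (fun b j => (Q j)`_b).
Proof.
move=> sP sQ; rewrite !dnat_mul; apply: dnat_ext => i j iN jN.
rewrite (beta_prod_expand (sP i iN) (sQ j jN)); apply: eq_bigr => b _.
by congr (_ * _); apply: eq_bigr.
Qed.
End Bilin.

Lemma dnat_monic_rows (R : comNzRingType) N (P : nat -> {poly R}) :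
  (forall i, (i < N)%N -> P i \is monic) ->
  (forall i, (i < N)%N -> size (P i) = i.+1) ->
  dnat N (fun i a => (P i)`_a) = 1.
Proof.
move=> Pm Ps; rewrite dnat_trig.
  rewrite big1 // => i _; have /monicP := Pm i (ltn_ord i); rewrite /lead_coef.
  by rewrite Ps ?ltn_ord.
by move=> i j /andP[ij jN]; rewrite nth_default // Ps //; apply: ltn_trans ij jN.
Qed.

Lemma dnat_monic_cols (R : comNzRingType) N (P : nat -> {poly R}) :
  (forall i, (i < N)%N -> P i \is monic) ->
  (forall i, (i < N)%N -> size (P i) = i.+1) ->
  dnat N (fun b j => (P j)`_b) = 1.
Proof. by move=> Pm Ps; rewrite (@dnat_tr _ N (fun i a => (P i)`_a)) dnat_monic_rows. Qed.

Lemma mconst_zmod (R : idomainType) (k : nat) : zmod_morphism (@mconst R k).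
Proof. by move=> x y; rewrite mconstD mconstN. Qed.
Lemma mconst_monoid (R : idomainType) (k : nat) : monoid_morphism (@mconst R k).
Proof. split; [exact: mconst1 | exact: mconstM]. Qed.
HB.instance Definition _ (R : idomainType) (k : nat) :=
  GRing.isZmodMorphism.Build R (mfps R k) (@mconst R k) (@mconst_zmod R k).
HB.instance Definition _ (R : idomainType) (k : nat) :=
  GRing.isMonoidMorphism.Build R (mfps R k) (@mconst R k) (@mconst_monoid R k).

Definition phiC (K : fieldType) (k : nat) : mfps K k -> mfps {poly K} k :=
  @mmap K {poly K} (@polyC K) k.

Lemma phiC_zmod (K : fieldType) (k : nat) : zmod_morphism (@phiC K k).
Proof.
have D := @mmapD K {poly K} (@polyC K) (@polyCD K) k.
have Z := @mmap0 K {poly K} (@polyC K) (polyC0 K) k.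
move=> x y; apply: (addIr (phiC y)); rewrite /phiC -D !subrK //.
Qed.
Lemma phiC_monoid (K : fieldType) (k : nat) : monoid_morphism (@phiC K k).
Proof.
split.
  exact: (@mmap1 K {poly K} (@polyC K) (polyC0 K) (polyC1 K) k).
exact: (@mmapM K {poly K} (@polyC K) (polyC0 K) (@polyCD K) (@polyCM K) k).
Qed.
HB.instance Definition _ (K : fieldType) (k : nat) :=
  GRing.isZmodMorphism.Build (mfps K k) (mfps {poly K} k) (@phiC K k) (@phiC_zmod K k).
HB.instance Definition _ (K : fieldType) (k : nat) :=
  GRing.isMonoidMorphism.Build (mfps K k) (mfps {poly K} k) (@phiC K k) (@phiC_monoid K k).

Lemma size_map_le (aR rR : nzRingType) (f : aR -> rR) (p : {poly aR}) :
  (size (map_poly f p) <= size p)%N.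
Proof. by rewrite /map_poly; apply: size_poly. Qed.

Lemma horner_polyC_X (R : comNzRingType) (f : {poly R}) : (map_poly (@polyC R) f).['X] = f.
Proof.
rewrite (horner_coef_wide _ (size_map_le _ f)) [RHS](poly_wide (leqnn (size f))).
by apply: eq_bigr => i _; rewrite coef_map /= mul_polyC.
Qed.

Section Nu.
Variable K : fieldType.
Variable L : {poly K} -> K.
Hypothesis L_linear : forall (a : K) (f g : {poly K}), L (a *: f + g) = a * L f + L g.
Variable k : nat.

Local Notation S := (mfps K k).
Local Notation F := {fraction (mfps K k)}.

Definition mom i : F := (int_mono L k i)%:F.
Definition nu (P : {poly F}) : F := \sum_(i < size P) P`_i * mom i.

Lemma nu_wide N (P : {poly F}) : (size P <= N)%N -> nu P = \sum_(i < N) P`_i * mom i.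
Proof.
move=> sP; rewrite /nu (big_ord_widen N (fun i => P`_i * mom i) sP).
rewrite big_mkcond /=; apply: eq_bigr => i _.
by case: ltnP => // h; rewrite nth_default // mul0r.
Qed.

Lemma nu_lin a (P Q : {poly F}) : nu (a *: P + Q) = a * nu P + nu Q.
Proof.
pose N := maxn (size P) (size Q).
have sP : (size P <= N)%N by rewrite leq_maxl.
have sQ : (size Q <= N)%N by rewrite leq_maxr.
have sPQ : (size (a *: P + Q)%R <= N)%N.
  by apply: leq_trans (size_polyD _ _) _; rewrite geq_max (leq_trans (size_scale_leq _ _)).
rewrite (nu_wide sPQ) (nu_wide sP) (nu_wide sQ) mulr_sumr -big_split /=.
by apply: eq_bigr => i _; rewrite coefD coefZ mulrDl mulrA.
Qed.

Lemma nuX s : nu 'X^s = mom s.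
Proof.
rewrite /nu size_polyXn big_ord_recr /= coefXn eqxx mul1r big1 ?add0r // => i _.
by rewrite coefXn ltn_eqF // mul0r.
Qed.

Definition nuS (P : {poly S}) : S := \sum_(i < size P) P`_i * int_mono L k i.

Lemma nu_map (P : {poly S}) : nu (map_poly (@tofrac S) P) = (nuS P)%:F.
Proof.
rewrite (nu_wide (size_map_le _ P)) /nuS rmorph_sum; apply: eq_bigr => i _.
by rewrite coef_map rmorphM.
Qed.

Definition W : mfps {poly K} k := \prod_(l < k) cauchy_kernel K k l.
Definition Xh : mfps {poly K} k := mconst k 'X.
Definition Phi (P : {poly S}) : mfps {poly K} k := (map_poly (@phiC K k) P).[Xh].

Lemma nuS_Phi (P : {poly S}) : nuS P = fint L (Phi P * W).
Proof.
rewrite /Phi (horner_coef_wide _ (size_map_le _ P)) mulr_suml (fint_sum L_linear).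
rewrite /nuS; apply: eq_bigr => i _.
rewrite coef_map -mulrA (fint_scal L_linear); congr (_ * _).
by rewrite /Xh -rmorphXn.
Qed.

Lemma PhiM (P Q : {poly S}) : Phi (P * Q) = Phi P * Phi Q.
Proof. by rewrite /Phi rmorphM hornerM. Qed.

Lemma Phi_prod (I : Type) (r : seq I) (Pr : pred I) (G : I -> {poly S}) :
  Phi (\prod_(i <- r | Pr i) G i) = \prod_(i <- r | Pr i) Phi (G i).
Proof.
rewrite /Phi rmorph_prod; elim/big_rec2: _ => [|i x y _ <-]; first by rewrite hornerC.
by rewrite hornerM.
Qed.

Lemma Phi_const (f : {poly K}) : Phi (map_poly (@mconst K k) f) = mconst k f.
Proof.
rewrite /Phi -map_poly_comp.
have -> : map_poly (@phiC K k \o @mconst K k) f = map_poly (@mconst {poly K} k) (map_poly (@polyC K) f).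
  rewrite -map_poly_comp; apply: eq_map_poly => a /=.
  exact: mmap_polyC_const.
by rewrite /Xh horner_map /= horner_polyC_X.
Qed.

Local Notation xv l := (mvar K k l).
Local Notation ck l := (cauchy_kernel K k l).

Definition Pi_S : {poly S} := \prod_(l < k) ((xv l)%:P * 'X - 1).
Definition Lag_S (l : 'I_k) : {poly S} := \prod_(m < k | m != l) ((xv m)%:P * 'X - 1).

Lemma Phi_lin (c : S) : Phi (c%:P * 'X - 1) = phiC c * Xh - 1.
Proof. by rewrite /Phi rmorphB rmorphM /= map_polyC map_polyX rmorph1 !hornerE. Qed.

Lemma lin_ck (l : 'I_k) : (phiC (xv l) * Xh - 1) * ck l = phiC (xv l).
Proof.
rewrite /phiC mmap_polyC_mvar // mulrC [_ * Xh]mulrC; exact: cauchy_id.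
Qed.

Lemma PhiPi_W : Phi Pi_S * W = phiC (\prod_(l < k) xv l).
Proof.
rewrite /Pi_S Phi_prod /W -big_split rmorph_prod; apply: eq_bigr => l _ /=.
by rewrite Phi_lin lin_ck.
Qed.

Lemma PhiLag_W (l : 'I_k) :
  Phi (Lag_S l) * W = phiC (\prod_(m < k | m != l) xv m) * ck l.
Proof.
rewrite /Lag_S Phi_prod /W [\prod_(l0 < k) ck l0](bigD1 l) //= mulrCA mulrC -big_split rmorph_prod.
by congr (_ * _); apply: eq_bigr => m _ /=; rewrite Phi_lin lin_ck.
Qed.

Lemma nuS_Pi (f : {poly K}) :
  nuS (map_poly (@mconst K k) f * Pi_S) = (\prod_(l < k) xv l) * mconst k (L f).
Proof.
rewrite nuS_Phi PhiM Phi_const -mulrA PhiPi_W mulrC (fint_scal L_linear).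
by rewrite (fint_const L_linear).
Qed.

Lemma nuS_Lag (f : {poly K}) (l : 'I_k) :
  nuS (map_poly (@mconst K k) f * Lag_S l) =
  (\prod_(m < k | m != l) xv m) * fint L (mconst k f * ck l).
Proof.
rewrite nuS_Phi PhiM Phi_const -mulrA PhiLag_W mulrCA (fint_scal L_linear).
by [].
Qed.

End Nu.

Section NuF.
Variable K : fieldType.
Variable L : {poly K} -> K.
Hypothesis L_linear : forall (a : K) (f g : {poly K}), L (a *: f + g) = a * L f + L g.
Variable k : nat.

Local Notation S := (mfps K k).
Local Notation F := {fraction (mfps K k)}.
Local Notation nu := (@nu K L k).

Definition xF (l : 'I_k) : F := (mvar K k l)%:F.
Definition Pi : {poly F} := \prod_(l < k) ('X - (yvar K k l)%:P).
Definition Lag (l : 'I_k) : {poly F} := \prod_(m < k | m != l) ('X - (yvar K k m)%:P).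
Definition hat (f : {poly K}) : {poly F} := map_poly (@tofrac S) (map_poly (@mconst K k) f).

Lemma xF_neq0 l : xF l != 0.
Proof. by rewrite /xF tofrac_eq0 mvar_neq0. Qed.

Lemma map_factor (l : 'I_k) :
  map_poly (@tofrac S) ((mvar K k l)%:P * 'X - 1) = (xF l)%:P * ('X - (yvar K k l)%:P).
Proof.
rewrite rmorphB rmorphM /= map_polyC map_polyX rmorph1 mulrBr -polyCM /yvar.
by rewrite divff ?xF_neq0.
Qed.

Lemma map_Pi : map_poly (@tofrac S) (Pi_S K k) = (\prod_(l < k) xF l)%:P * Pi.
Proof.
rewrite /Pi_S rmorph_prod (eq_bigr _ (fun l _ => map_factor l)) big_split /=.
by rewrite rmorph_prod.
Qed.

Lemma map_Lag (l : 'I_k) :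
  map_poly (@tofrac S) (Lag_S K l) = (\prod_(m < k | m != l) xF m)%:P * Lag l.
Proof.
rewrite /Lag_S rmorph_prod (eq_bigr _ (fun l _ => map_factor l)) big_split /=.
by rewrite rmorph_prod.
Qed.

Lemma nu0 : nu 0 = 0.
Proof.
have := @nu_lin K L k 1 0 0; rewrite scale1r addr0 mul1r => h.
by apply: (addrI (nu 0)); rewrite addr0 -h.
Qed.

Lemma nu_scale c P : nu (c *: P) = c * nu P.
Proof. by rewrite -[c *: P]addr0 (@nu_lin K L k) nu0 addr0. Qed.

Lemma hatM f g : hat (f * g) = hat f * hat g.
Proof. by rewrite /hat !rmorphM. Qed.

Lemma nu_Pi (f : {poly K}) : nu (hat f * Pi) = (mconst k (L f))%:F.
Proof.
have := nu_map L (map_poly (@mconst K k) f * Pi_S K k).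
rewrite (nuS_Pi L_linear) rmorphM /= map_Pi -/(hat f) mulrCA mul_polyC nu_scale.
rewrite rmorphM rmorph_prod /= => /mulfI; apply.
by rewrite prodf_seq_neq0; apply/allP => l _; rewrite xF_neq0.
Qed.

Lemma nu_Lag (f : {poly K}) (l : 'I_k) :
  nu (hat f * Lag l) = (fint L (mconst k f * cauchy_kernel K k l))%:F.
Proof.
have := nu_map L (map_poly (@mconst K k) f * Lag_S K l).
rewrite (nuS_Lag L_linear) rmorphM /= map_Lag -/(hat f) mulrCA mul_polyC nu_scale.
rewrite rmorphM rmorph_prod /= => /mulfI; apply.
by rewrite prodf_seq_neq0; apply/allP => m _; rewrite xF_neq0 implybT.
Qed.

End NuF.

Section Lagr.
Variable F : fieldType.
Variable k : nat.
Variable y : nat -> F.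
Hypothesis ydist : forall i j, (i < k)%N -> (j < k)%N -> i != j -> y i != y j.

Definition LagG (l : nat) : {poly F} := \prod_(m < k | (m : nat) != l) ('X - (y m)%:P).
Definition wG (l : nat) : F := \prod_(m < k | (m : nat) != l) (y l - y m).
Definition Vy : F := \prod_(i < k) \prod_(j < k | (i < j)%N) (y i - y j).

Lemma LagG_ord (l : 'I_k) : LagG l = \prod_(m < k | m != l) ('X - (y m)%:P).
Proof. by []. Qed.

Lemma size_LagG l : (l < k)%N -> size (LagG l) = k.
Proof.
move=> lk; have k0 : (0 < k)%N by apply: leq_ltn_trans lk.
rewrite (LagG_ord (Ordinal lk)) -big_filter size_prod_XsubC size_filter.
have := cardC1 (Ordinal lk); rewrite card_ord cardE /enum_mem size_filter.
by move=> h; rewrite -[X in _ = X](prednK k0) -h; congr S.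
Qed.

Lemma LagG_monic l : LagG l \is monic.
Proof. exact: monic_prod_XsubC. Qed.

Lemma LagG_top l : (l < k)%N -> (LagG l)`_k.-1 = 1.
Proof.
move=> lk; have /monicP := LagG_monic l; rewrite /lead_coef size_LagG //.
Qed.

Lemma LagG_eval a l : (a < k)%N -> (l < k)%N ->
  (LagG l).[y a] = if a == l then wG l else 0.
Proof.
move=> ak lk; rewrite /LagG horner_prod.
case: eqP => [->|/eqP al].
  by apply: eq_bigr => m _; rewrite hornerXsubC.
rewrite (bigD1 (Ordinal ak)) //= hornerXsubC subrr mul0r //.
Qed.

Lemma wG_neq0 l : (l < k)%N -> wG l != 0.
Proof.
move=> lk; rewrite /wG; apply/prodf_neq0 => m ml.
by rewrite subr_eq0 ydist // eq_sym.
Qed.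

Lemma Vd_Lag a l : (a < k)%N -> (l < k)%N ->
  \sum_(b < k) y a ^+ b * (LagG l)`_b = if a == l then wG l else 0.
Proof.
move=> ak lk; rewrite -LagG_eval // (horner_coef_wide _ (eq_leq (size_LagG lk))).
by apply: eq_bigr => b _; rewrite mulrC.
Qed.

Lemma det_Vd : dnat k (fun a b => y a ^+ b) = \prod_(i < k) \prod_(j < k | (i < j)%N) (y j - y i).
Proof.
rewrite -dnat_tr /dnat.
have -> : \matrix_(i < k, j < k) y j ^+ i = Vandermonde k (\row_(j < k) y j).
  by apply/matrixP => i j; rewrite !mxE.
rewrite det_Vandermonde; apply: eq_bigr => i _; apply: eq_bigr => j _.
by rewrite !mxE.
Qed.

Lemma prod_wG : \prod_(l < k) wG l = dnat k (fun a b => y a ^+ b) * Vy.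
Proof.
rewrite det_Vd /Vy /wG.
rewrite (eq_bigr (fun l : 'I_k => (\prod_(m < k | (m < l)%N) (y l - y m)) *
                                  (\prod_(m < k | (l < m)%N) (y l - y m)))); last first.
  move=> l _; rewrite (bigID (fun m : 'I_k => (m < l)%N)) /=.
  by congr (_ * _); apply: eq_bigl => m; case: (ltngtP m l).
rewrite big_split /=; congr (_ * _).
by rewrite (exchange_big_dep xpredT).
Qed.

Lemma det_Vd_neq0 : dnat k (fun a b => y a ^+ b) != 0.
Proof.
rewrite det_Vd; apply/prodf_neq0 => i _; apply/prodf_neq0 => j ij.
rewrite subr_eq0 ydist //; by rewrite neq_ltn ij orbT.
Qed.

Lemma det_Lag : dnat k (fun b l => (LagG l)`_b) = Vy.
Proof.
apply: (mulfI det_Vd_neq0); rewrite dnat_mul -prod_wG.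
rewrite (dnat_ext (g := fun a l => if a == l then wG a else 0)).
  by rewrite dnat_diag; apply: eq_bigr => i _.
by move=> a l ak lk; rewrite Vd_Lag //; case: eqP => // ->.
Qed.

Lemma sigma_id (i s : 'I_k) :
  \sum_(l < k) (LagG l)`_i / wG l * y l ^+ s = (i == s)%:R.
Proof.
pose A := \matrix_(a < k, b < k) y a ^+ b.
pose B := \matrix_(b < k, l < k) ((LagG l)`_b / wG l).
have AB : A *m B = 1%:M.
  apply/matrixP => a l; rewrite !mxE.
  under eq_bigr do rewrite !mxE mulrA.
  rewrite -mulr_suml Vd_Lag //.
  have -> : ((a : nat) == l) = (a == l) by [].
  case: (boolP (a == l)) => al; first by rewrite divff ?wG_neq0.
  by rewrite mul0r.
have := mulmx1C AB => /matrixP /(_ i s); rewrite !mxE => <-.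
by apply: eq_bigr => l _; rewrite !mxE.
Qed.

End Lagr.

Lemma sign_split (R : nzRingType) (a b : nat) : (b <= a)%N ->
  (-1) ^+ (a * b) = (-1) ^+ ((a - b) * b) * (-1) ^+ b :> R.
Proof.
move=> ba; rewrite -exprD -signr_odd [RHS]/= -[RHS]signr_odd; congr (_ ^+ _).
have -> : (a * b = (a - b) * b + b * b)%N by rewrite -mulnDl subnK.
by rewrite !oddD !oddM andbb.
Qed.

Section Main.
Variable K : fieldType.
Variable L : {poly K} -> K.
Hypothesis L_linear : forall (a : K) (f g : {poly K}), L (a *: f + g) = a * L f + L g.
Variable p : nat -> {poly K}.
Variable omega : nat -> K.
Hypothesis p_monic : forall n, p n \is monic.
Hypothesis p_size : forall n, size (p n) = n.+1.
Hypothesis p_orth : forall m n, L (p m * p n) = if m == n then omega n else 0.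
Hypothesis omega_neq0 : forall n, omega n != 0.
Variable k : nat.

Local Notation S := (mfps K k).
Local Notation F := {fraction (mfps K k)}.
Local Notation nu := (@nu K L k).
Local Notation y := (yvar K k).

Lemma hankel_prod m : hankel L m = \prod_(i < m) omega i.
Proof.
have sp : forall i, (i < m)%N -> (size (p i) <= m)%N by move=> i im; rewrite p_size.
have H := dnat_bilin L_linear sp sp.
rewrite (dnat_monic_rows (P:=p)) // (dnat_monic_cols (P:=p)) // mul1r mulr1 in H.
rewrite /hankel -[\det _]/(dnat m (fun i j => L 'X^(i + j))) -H.
rewrite (dnat_ext (g := fun i j => if i == j then omega i else 0)).
  by rewrite dnat_diag.
by move=> i j _ _; rewrite p_orth; case: eqP => // ->.
Qed.

Lemma tofrac_inj : injective (@tofrac S).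
Proof. by move=> a b /eqP; rewrite tofrac_eq => /eqP. Qed.

Lemma ydist i j : (i < k)%N -> (j < k)%N -> i != j -> y i != y j.
Proof.
move=> ik jk ij; apply/eqP => /invr_inj /tofrac_inj /(mvar_inj ik jk) /eqP.
by rewrite (negbTE ij).
Qed.

Lemma hat_lead (f : {poly K}) : lead_coef (hat k f) = (mconst k (lead_coef f))%:F.
Proof.
rewrite /hat (lead_coef_map_inj tofrac_inj (rmorph0 _)) lead_coef_map //.
Qed.

Lemma hat_size (f : {poly K}) : size (hat k f) = size f.
Proof.
rewrite /hat (size_map_inj_poly tofrac_inj (rmorph0 _)) size_map_poly //.
Qed.

Lemma hat_monic (f : {poly K}) : f \is monic -> hat k f \is monic.
Proof. by move/monicP => h; apply/monicP; rewrite hat_lead h rmorph1 rmorph1. Qed.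

Lemma hatp_size i : size (hat k (p i)) = i.+1.
Proof. by rewrite hat_size p_size. Qed.
Lemma hatp_monic i : hat k (p i) \is monic.
Proof. exact: hat_monic. Qed.

Lemma nu_lin_sum N (P Q : {poly F}) : (size Q <= N)%N ->
  \sum_(b < N) nu (P * 'X^b) * Q`_b = nu (P * Q).
Proof.
move=> sQ; rewrite {2}(poly_wide sQ) mulr_sumr (beta_sum (@nu_lin K L k)).
apply: eq_bigr => b _; rewrite -scalerAr (betaZ (@nu_lin K L k)) mulrC //.
Qed.

Lemma nu_LagG a l : (l < k)%N ->
  nu (hat k (p a) * LagG k y l) = - (qfun L p k a l)%:F.
Proof.
move=> lk; have -> : LagG k y l = Lag K (Ordinal lk) by [].
rewrite (nu_Lag L_linear) /qfun mulrN (fint_opp L_linear) rmorphN opprK //.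
Qed.

Lemma nu_hatPi i j :
  nu (hat k (p i) * (hat k (p j) * Pi K k)) = if i == j then (mconst k (omega i))%:F else 0.
Proof.
rewrite mulrA -hatM (nu_Pi L_linear) p_orth.
by case: eqP => [->|_] //; rewrite mconst0 rmorph0.
Qed.

Lemma Pi_monic : Pi K k \is monic.
Proof. exact: monic_prod_XsubC. Qed.

Lemma Pi_size : size (Pi K k) = k.+1.
Proof. by rewrite /Pi size_prod_XsubC [index_enum _]unlock -enumT size_enum_ord. Qed.

Lemma Vy_neq0 : Vy k y != 0.
Proof.
apply/prodf_neq0 => i _; apply/prodf_neq0 => j ij.
by rewrite subr_eq0 ydist // neq_ltn ij.
Qed.

Lemma Mdet n : (\det (\matrix_(i < n, j < n) (int_mono L k (i + j))%:F) : F)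
  = dnat n (fun i j => nu 'X^(i + j)).
Proof. by rewrite /dnat; congr (\det _); apply/matrixP => i j; rewrite !mxE nuX. Qed.

Lemma case1 n : (k <= n)%N ->
  (\det (\matrix_(i < n, j < n) (int_mono L k (i + j))%:F) : F)
       / (mconst k (hankel L (n - k)))%:F
     = (-1) ^+ (n * k)
       * \det (\matrix_(i < k, j < k) (qfun L p k (n - k + j) i)%:F)
       / vandermonde_y K k.
Proof.
move=> kn.
pose P i := hat k (p i).
pose R j := if (j < k)%N then 'X^j else hat k (p (j - k)) * Pi K k.
have R_monic : forall j, R j \is monic.
  move=> j; rewrite /R; case: ltnP => _; first exact: monicXn.
  by rewrite monicMr ?hatp_monic ?Pi_monic.
have R_size : forall j, size (R j) = j.+1.
  move=> j; rewrite /R; case: ltnP => jk; first by rewrite size_polyXn.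
  rewrite size_Mmonic ?monic_neq0 ?hatp_monic ?Pi_monic // hatp_size Pi_size.
  rewrite addSn addnS /=; lia.
have M_eq : dnat n (fun i j => nu 'X^(i + j)) = dnat n (fun i j => nu (P i * R j)).
  rewrite (dnat_bilin (@nu_lin K L k) (P := P) (Q := R)); first last.
  - by move=> j jn; rewrite R_size.
  - by move=> i iN; rewrite hatp_size.
  rewrite dnat_monic_rows ?dnat_monic_cols ?mul1r ?mulr1 //.
  - by move=> i _; exact: hatp_monic.
  - by move=> i _; exact: hatp_size.
have nE : n = (n - k + k)%N by rewrite subnK.
set H := (mconst k (hankel L (n - k)))%:F.
have H0 : H != 0.
  rewrite /H tofrac_eq0 fmorph_eq0 hankel_prod; apply/prodf_neq0 => i _; exact: omega_neq0.
have detE : dnat n (fun i j => nu (P i * R j)) =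
    (-1) ^+ ((n - k) * k) * H * dnat k (fun i j => nu (P (n - k + i)%N * 'X^j)).
  rewrite [in LHS]nE det_anti_BR; last first.
    move=> i j /andP[ki _] /andP[kj jn]; rewrite /R ltnNge kj /= nu_hatPi.
    by rewrite (_ : (i == j - k)%N = false) //; apply/negbTE; rewrite neq_ltn; apply/orP; right; lia.
  congr (_ * _ * _).
    rewrite (dnat_ext (g := fun i j => if i == j then (mconst k (omega i))%:F else 0)).
      rewrite dnat_diag /H hankel_prod !rmorph_prod //.
    move=> i j _ _; rewrite /R ltnNge leq_addr /= nu_hatPi.
    by rewrite (_ : (k + j - k = j)%N) //; lia.
  by apply: dnat_ext => i j _ jk; rewrite /R jk.
have detB : dnat k (fun i j => nu (P (n - k + i)%N * 'X^j)) * vandermonde_y K k =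
    (-1) ^+ k * \det (\matrix_(i < k, j < k) (qfun L p k (n - k + j) i)%:F).
  have -> : vandermonde_y K k = Vy k y by [].
  rewrite -(det_Lag (@ydist)) dnat_mul.
  rewrite (dnat_ext (g := fun i j => - (qfun L p k (n - k + i) j)%:F)); last first.
    move=> i j _ jk; rewrite nu_lin_sum ?nu_LagG //.
    by rewrite size_LagG //; exact: ydist.
  by rewrite dnat_opp; congr (_ * _); rewrite -dnat_tr.
rewrite Mdet M_eq detE.
set B := dnat k _; set D := \det _; set s1 := (-1) ^+ _.
rewrite mulrAC -[s1 * H * H^-1]mulrA mulfV // mulr1.
have V0 : vandermonde_y K k != 0 by exact: Vy_neq0.
apply: (mulIf V0); rewrite divfK // -mulrA detB mulrA /s1 -sign_split //.
Qed.

Definition sigmaF s : F := \sum_(l < k) y l ^+ s / wG k y l.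

Lemma sigmaF_val s : (s < k)%N -> sigmaF s = (s == k.-1)%:R.
Proof.
move=> sk; have k0 : (0 < k)%N by apply: leq_ltn_trans sk.
have km : (k.-1 < k)%N by rewrite prednK.
have h := sigma_id (@ydist) (Ordinal km) (Ordinal sk).
transitivity ((Ordinal km == Ordinal sk)%:R : F); last by rewrite eq_sym.
rewrite -h; apply: eq_bigr => l _; rewrite LagG_top // mul1r mulrC //.
Qed.

Lemma case2 n : (n < k)%N ->
  (\det (\matrix_(i < n, j < n) (int_mono L k (i + j))%:F) : F)
     = (-1) ^+ (n * k)
       * \det (\matrix_(i < k, j < k)
                 (if (j < k - n)%N then yvar K k i ^+ (k - n - 1 - j)
                  else (qfun L p k (j - (k - n)) i)%:F))
       / vandermonde_y K k.
Proof.
move=> nk; have k0 : (0 < k)%N by apply: leq_ltn_trans nk.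
pose P i := hat k (p i).
have M_eq : dnat n (fun i j => nu 'X^(i + j)) = dnat n (fun i j => nu (P i * 'X^j)).
  rewrite (dnat_bilin (@nu_lin K L k) (P := P) (Q := fun j => 'X^j)); first last.
  - by move=> j jn; rewrite size_polyXn.
  - by move=> i iN; rewrite hatp_size.
  rewrite dnat_monic_rows ?dnat_monic_cols ?mul1r ?mulr1 //.
  - by move=> i _; exact: monicXn.
  - by move=> i _; exact: size_polyXn.
  - by move=> i _; exact: hatp_monic.
  - by move=> i _; exact: hatp_size.
pose Nf i j := if (j < k - n)%N then y i ^+ (k - n - 1 - j)
               else (qfun L p k (j - (k - n)) i)%:F.
pose E0 a j := if (a < k - n)%N then sigmaF (k - n - 1 - a + j)
               else - nu (P (a - (k - n))%N * 'X^j).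
have EC : dnat k E0 * dnat k (fun b l => (LagG k y l)`_b) = dnat k (fun a l => Nf l a).
  rewrite dnat_mul; apply: dnat_ext => a l ak lk; rewrite /E0 /Nf.
  case: ltnP => akn.
    rewrite /sigmaF.
    under eq_bigr do rewrite mulr_suml.
    rewrite exchange_big /=.
    rewrite (eq_bigr (fun l' : 'I_k => y l' ^+ (k - n - 1 - a) / wG k y l' *
               \sum_(b < k) y l' ^+ b * (LagG k y l)`_b)); last first.
      move=> l' _; rewrite mulr_sumr; apply: eq_bigr => b _; rewrite exprD; ring.
    rewrite [X in X = _](bigD1 (Ordinal lk)) //= [X in _ + X = _]big1 ?addr0.
      by rewrite Vd_Lag // eqxx divfK // (wG_neq0 (@ydist)).
    move=> l' /eqP nl; rewrite Vd_Lag //.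
    rewrite (_ : ((l' : nat) == l) = false) ?mulr0 //; apply/negbTE/eqP => e; apply: nl.
    exact: val_inj.
  under eq_bigr do rewrite mulNr.
  rewrite sumrN nu_lin_sum ?nu_LagG ?opprK //.
  by rewrite size_LagG //; exact: ydist.
have kE : k = (k - n + n)%N by rewrite subnK // ltnW.
have detE0 : dnat k E0 = (-1) ^+ ((k - n) * n) * ((-1) ^+ n * dnat n (fun i j => nu (P i * 'X^j))).
  rewrite (_ : dnat k E0 = dnat (k - n + n) E0); last by rewrite -kE.
  rewrite det_anti_TL; last first.
    move=> a j akn jn; rewrite /E0 akn sigmaF_val; last by lia.
    by rewrite (_ : (_ == _) = false) //; apply/negbTE; rewrite neq_ltn; apply/orP; left; lia.
  rewrite -mulrA; congr (_ * _).
  rewrite (_ : dnat (k - n) _ = 1) ?mul1r; last first.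
    rewrite -dnat_tr dnat_trig; last first.
      move=> i j /andP[ij jkn]; rewrite /E0 jkn sigmaF_val; last by lia.
      by rewrite (_ : (_ == _) = false) //; apply/negbTE; rewrite neq_ltn; apply/orP; left; lia.
    rewrite big1 // => i _; rewrite /E0 ltn_ord sigmaF_val; last by have := ltn_ord i; lia.
    by rewrite (_ : (_ == _) = true) //; apply/eqP; have := ltn_ord i; lia.
  rewrite -dnat_opp; apply: dnat_ext => i j _ _; rewrite /E0.
  rewrite (_ : (k - n + i < k - n)%N = false); last by lia.
  by rewrite (_ : (k - n + i - (k - n) = i)%N) //; lia.
have detN : \det (\matrix_(i < k, j < k) Nf i j) = dnat k E0 * vandermonde_y K k.
  have -> : vandermonde_y K k = Vy k y by [].
  by rewrite -(det_Lag (@ydist)) EC -dnat_tr.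
have V0 : vandermonde_y K k != 0 by exact: Vy_neq0.
rewrite Mdet M_eq.
transitivity ((-1) ^+ (n * k) * (dnat k E0 * vandermonde_y K k) / vandermonde_y K k);
  last by rewrite -detN.
rewrite mulrA mulfK // detE0 mulnC (sign_split _ (ltnW nk)).
set D := dnat n _.
have hs : forall a, (-1) ^+ a * (-1) ^+ a = 1 :> F.
  by move=> a; rewrite -exprD -signr_odd oddD addbb.
transitivity ((-1) ^+ ((k - n) * n) * (-1) ^+ ((k - n) * n) * ((-1) ^+ n * (-1) ^+ n) * D : F).
  by rewrite !hs !mul1r.
ring.
Qed.

End Main.


Unset Implicit Arguments.
Set Strict Implicit.
Theorem corollary3
  (K : fieldType) (charK0 : [pchar K] =i pred0)
  (L : {poly K} -> K)
  (L_linear : forall (a : K) (f g : {poly K}), L (a *: f + g) = a * L f + L g)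
  (p : nat -> {poly K}) (omega : nat -> K)
  (p_monic : forall n, p n \is monic)
  (p_size : forall n, size (p n) = n.+1)
  (p_orth : forall m n, L (p m * p n) = if m == n then omega n else 0)
  (omega_neq0 : forall n, omega n != 0)
  (k n : nat) :
  ((k <= n)%N ->
     (\det (\matrix_(i < n, j < n) (int_mono L k (i + j))%:F)
        : {fraction mfps K k})
       / (mconst k (hankel L (n - k)))%:F
     = (-1) ^+ (n * k)
       * \det (\matrix_(i < k, j < k) (qfun L p k (n - k + j) i)%:F)
       / vandermonde_y K k)
  /\
  ((n < k)%N ->
     (\det (\matrix_(i < n, j < n) (int_mono L k (i + j))%:F)
        : {fraction mfps K k})
     = (-1) ^+ (n * k)
       * \det (\matrix_(i < k, j < k)
                 (if (j < k - n)%N then yvar K k i ^+ (k - n - 1 - j)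
                  else (qfun L p k (j - (k - n)) i)%:F))
       / vandermonde_y K k).
Proof.
split => h; [apply: case1 | apply: case2] => //.
Qed.
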